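(* Let $M=p_i^{n_i}p_j^{n_j}p_k^{n_k}$ with distinct primes $p_i,p_j,p_k$ and $n_i,n_j,n_k\in\mathbb{N}$, let $A\oplus B=\mathbb{Z}_M$ with $\Phi_M(X)\mid A(X)$, and assume $A$ is fibered on $D$-grids, where $D=M/(p_ip_jp_k)$. Let $a,a'\in A$ and $b,b'\in B$. If $(b*F(a))\cap(b'*F(a'))\neq\emptyset$, then $b=b'$ and $F(a)=F(a')$.
   Context: $A\oplus B=\mathbb{Z}_M$ means every element of $\mathbb{Z}_M$ is uniquely $a+b$, $a\in A$, $b\in B$; $A(X)=\sum_{a\in A}X^a$ ($A$ in $\{0,\dots,M-1\}$), $\Phi_M$ the $M$-th cyclotomic polynomial. For $d\mid M$, $\Lambda(x,d)=\{x'\in\mathbb{Z}_M:d\mid x-x'\}$. For $\nu\in\{i,j,k\}$, $F_\nu=\{0,M/p_\nu,\dots,(p_\nu-1)M/p_\nu\}$, $x*Y=\{x+y:y\in Y\}$. A set $Y$ is fibered in the $p_\nu$ direction if $Y$ is a union of sets $y*F_\nu$ with $y\in Y$. ''$A$ is fibered on $D$-grids'' means for every $a\in A$, $A\cap\Lambda(a,D)$ is fibered in some direction $p_\nu$. The function $\kappa:A\to\{i,j,k\}$: for each $D$-grid $\Lambda(x,D)$ meeting $A$, fix one direction $\nu(x)$ in which $A\cap\Lambda(x,D)$ is fibered (chosen arbitrarily if several) and set $\kappa(a)=\nu(x)$ for all $a\in A\cap\Lambda(x,D)$. Define $F(a)=a*F_{\kappa(a)}$ for $a\in A$ (so $F(a)\subset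 A$). *)

(* Defs.v *)
From HB Require Import structures.
From mathcomp Require Import all_boot all_order all_algebra.
From mathcomp Require Import cyclotomic.
Unset Printing Implicit Defensive.
Import GRing.Theory.
Local Open Scope ring_scope.

(* Z_M is 'Z_M (M > 1 in our setting); directions i,j,k are indexed by 'I_3. *)

Definition tiling (M : nat) (A B : {set 'Z_M}) : Prop :=
  forall z : 'Z_M, exists! ab : 'Z_M * 'Z_M,
    [/\ ab.1 \in A, ab.2 \in B & ab.1 + ab.2 = z].

Definition mask_poly (M : nat) (A : {set 'Z_M}) : {poly int} :=
  \sum_(a in A) 'X^(val a).

Definition shift (M : nat) (x : 'Z_M) (Y : {set 'Z_M}) : {set 'Z_M} :=
  [set x + y | y in Y].

Definition Fdir (M : nat) (p : 'I_3 -> nat) (nu : 'I_3) : {set 'Z_M} :=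
  [set ((val t * (M %/ p nu))%N%:R : 'Z_M) | t : 'I_(p nu)].

Definition fibered_dir (M : nat) (p : 'I_3 -> nat) (Y : {set 'Z_M}) (nu : 'I_3)
  : Prop := forall y, y \in Y -> shift M y (Fdir M p nu) \subset Y.

Definition grid (M : nat) (d : nat) (x : 'Z_M) : {set 'Z_M} :=
  [set x' : 'Z_M | (d %| val (x - x')%R)%N].

Definition fibered_on_grids (M : nat) (p : 'I_3 -> nat) (D : nat)
  (A : {set 'Z_M}) : Prop :=
  forall a, a \in A -> exists nu : 'I_3, fibered_dir M p (A :&: grid M D a) nu.

Definition kappa_choice (M : nat) (p : 'I_3 -> nat) (D : nat)
  (A : {set 'Z_M}) (kappa : 'Z_M -> 'I_3) : Prop :=
  (forall a, a \in A -> fibered_dir M p (A :&: grid M D a) (kappa a)) /\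
  (forall a a', a \in A -> a' \in A -> a' \in grid M D a -> kappa a = kappa a').

Definition Ffib (M : nat) (p : 'I_3 -> nat) (kappa : 'Z_M -> 'I_3) (a : 'Z_M)
  : {set 'Z_M} := shift M a (Fdir M p (kappa a)).

(* Main.v *)
Require Import Defs.
From HB Require Import structures.
From mathcomp Require Import all_boot all_order all_algebra.
From mathcomp Require Import cyclotomic.
From mathcomp Require Import zify.
Import GRing.Theory.

Definition zmul (M e : nat) (z : 'Z_M) : Prop := exists k : nat, z = ((k * e)%N)%:R%R.


Lemma zmulD M e (x y : 'Z_M) : zmul M e x -> zmul M e y -> zmul M e (x + y)%R.
Proof. by move=> [k ->] [l ->]; exists (k + l)%N; rewrite mulnDl natrD. Qed.

Lemma zmulN M e (M1 : (1 < M)%N) (eM : (e %| M)%N) (x : 'Z_M) : zmul M e x -> zmul M e (- x)%R.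
Proof.
move=> [k ->]; exists ((M %/ e).-1 * k)%N.
have q0 : (0 < M %/ e)%N.
  have e0 : (0 < e)%N by case: e eM => //; rewrite dvd0n => /eqP E; rewrite E in M1.
  by rewrite divn_gt0 // dvdn_leq //; apply/ltnW.
apply/eqP; rewrite eq_sym -addr_eq0 -natrD.
have -> : ((M %/ e).-1 * k * e + k * e = k * ((M %/ e) * e))%N.
  case: (M %/ e) q0 => // q _ /=. rewrite mulSn. lia.
by rewrite divnK // natrM pchar_Zp // mulr0.
Qed.

Lemma zmul_dvd M e (M1 : (1 < M)%N) (eM : (e %| M)%N) (x : 'Z_M) : zmul M e x -> (e %| val x)%N.
Proof.
move=> [k ->]; rewrite [val _](val_Zp_nat M1).
by rewrite /dvdn modn_dvdm // -/(dvdn e (k * e)) dvdn_mull.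
Qed.

Lemma zmul_weak M e e' (x : 'Z_M) : (e' %| e)%N -> zmul M e x -> zmul M e' x.
Proof. by move=> /dvdnP [q ->] [k ->]; exists (k * q)%N; rewrite mulnA. Qed.

Arguments zmulD {M e x y}.
Arguments zmulN {M e} M1 eM {x}.
Arguments zmul_dvd {M e} M1 eM {x}.
Arguments zmul_weak {M e e' x}.

Lemma Fdir_zmul M p nu (x : 'Z_M) : x \in Fdir M p nu -> zmul M (M %/ p nu) x.
Proof. by case/imsetP => t _ ->; exists (val t). Qed.

Arguments Fdir_zmul {M p nu x}.
Lemma zmul_Fdir M p nu (x : 'Z_M) : (1 < M)%N -> (0 < p nu)%N -> (p nu %| M)%N ->
  zmul M (M %/ p nu) x -> x \in Fdir M p nu.
Proof.
move=> M1 p0 pM [k ->]; apply/imsetP; exists (Ordinal (ltn_pmod k p0)) => //=.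
rewrite {1}(divn_eq k (p nu)) mulnDl natrD -mulnA [(p nu * _)%N]mulnC divnK //.
by rewrite natrM pchar_Zp // mulr0 add0r.
Qed.

Lemma shift_sub M p nu (a a' : 'Z_M) : (1 < M)%N -> (0 < p nu)%N -> (p nu %| M)%N ->
  zmul M (M %/ p nu) (a - a')%R -> shift M a (Fdir M p nu) \subset shift M a' (Fdir M p nu).
Proof.
move=> M1 p0 pM hz; apply/subsetP => z /imsetP [y Hy ->].
apply/imsetP; exists (a - a' + y)%R; last by rewrite addrA addrCA subrr addr0.
apply: zmul_Fdir => //; apply: zmulD => //; exact: Fdir_zmul.
Qed.

Theorem lemma7p3 (p n : 'I_3 -> nat) (M : nat) (A B : {set 'Z_M})
  (kappa : 'Z_M -> 'I_3) (a a' b b' : 'Z_M) :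
  (forall i, prime (p i)) -> injective p -> (forall i, 0 < n i)%N ->
  M = (\prod_(i < 3) p i ^ n i)%N ->
  tiling M A B ->
  ('Phi_M %| mask_poly M A)%R ->
  fibered_on_grids M p (M %/ \prod_(i < 3) p i)%N A ->
  kappa_choice M p (M %/ \prod_(i < 3) p i)%N A kappa ->
  a \in A -> a' \in A -> b \in B -> b' \in B ->
  shift M b (Ffib M p kappa a) :&: shift M b' (Ffib M p kappa a') != set0 ->
  b = b' /\ Ffib M p kappa a = Ffib M p kappa a'.
Proof.
move=> pr _ n0 HM til _ _ [kf kc] Ha Ha' Hb Hb' /set0Pn [z /setIP [Hz Hz']].
set P := (\prod_(i < 3) p i)%N.
set D := (M %/ P)%N.
have p0 i : (0 < p i)%N by apply: prime_gt0.
have PM : (P %| M)%N.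
  rewrite HM /P !big_ord_recr !big_ord0 /= !mul1n.
  by rewrite !dvdn_mul // -{1}(expn1 (p _)) dvdn_exp2l.
have pP i : (p i %| P)%N by rewrite /P (bigD1 i) //= dvdn_mulr.
have DvM : (D %| M)%N by apply: dvdn_div.
have pM i : (p i %| M)%N by apply: dvdn_trans (pP i) PM.
have M1 : (1 < M)%N.
  have := prime_gt1 (pr ord0); have := dvdn_leq _ (pM ord0).
  rewrite HM !big_ord_recr !big_ord0 /= !mul1n => h.
  suff : (0 < M)%N by rewrite HM !big_ord_recr !big_ord0 /= !mul1n => /h; lia.
  by rewrite HM prodn_gt0 // => i; rewrite expn_gt0 p0.
have DM i : (D %| M %/ p i)%N.
  have -> : (M %/ p i = D * (P %/ p i))%N by rewrite muln_divA // /D divnK.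
  exact: dvdn_mulr.
have FA x : x \in A -> Ffib M p kappa x \subset A.
  move=> Hx; apply: subset_trans (kf x Hx x _) _; first by rewrite inE Hx inE subrr /= dvdn0.
  exact: subsetIl.
move: Hz Hz' => /imsetP [x Hx ->] /imsetP [x' Hx' Ex].
have HxA : x \in A by apply: (subsetP (FA a Ha)).
have Hx'A : x' \in A by apply: (subsetP (FA a' Ha')).
have [[x0 b0] [_ U]] := til (b + x)%R.
have E1 := U (x, b) (And3 HxA Hb (addrC _ _)).
have E2 := U (x', b') (And3 Hx'A Hb' (esym (etrans Ex (addrC _ _)))).
have [ex eb] : x = x' /\ b = b' by move: E1; rewrite E2; case=> -> ->.
split; first exact: eb.
move: Hx Hx' => /imsetP [f Hf Ef] /imsetP [f' Hf' Ef'].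
have Haa : (a - a' = f' - f)%R.
  rewrite -[a](addrK f) -[a'](addrK f') -Ef -Ef' ex.
  by rewrite opprB addrC addrA subrK.
have kk : kappa a = kappa a'.
  apply: kc => //; rewrite inE Haa.
  suff HH : zmul M D (f' - f)%R by exact: (zmul_dvd M1 DvM HH).
  apply: zmulD.
  - by apply: (zmul_weak (DM (kappa a'))); apply: Fdir_zmul.
  - apply: (zmulN M1 DvM).
    by apply: (zmul_weak (DM (kappa a))); apply: Fdir_zmul.
rewrite /Ffib -kk; apply/eqP; rewrite eqEsubset; apply/andP; split;
  apply: shift_sub => //.
- rewrite Haa; apply: zmulD.
  rewrite kk. exact: (Fdir_zmul Hf').
  apply: (zmulN M1 (dvdn_div (pM (kappa a)))).
  exact: (Fdir_zmul Hf).
- rewrite -opprB Haa; apply: (zmulN M1 (dvdn_div (pM (kappa a)))).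
  apply: zmulD. rewrite kk. exact: (Fdir_zmul Hf').
  apply: (zmulN M1 (dvdn_div (pM (kappa a)))). exact: (Fdir_zmul Hf).
Qed.
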